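(* Let $H$ be a real Hilbert space, $\mathcal{I}$ a finite index set, $J,g_i:H\to\mathbb{R}$ ($i\in\mathcal{I}$) $\mathcal{C}^1$ functions, $\Omega=\{u\in H: g_i(u)\le 0\ \forall i\in\mathcal{I}\}$, and assume that for every $u\in\Omega$ with $I_A(u)\ne\emptyset$ the vectors $\{g_i'(u): i\in I_A(u)\}$ are linearly independent. Let $u\in\Omega$ and let $d\in H$ satisfy $\langle d, g_i'(u)\rangle=0$ for all $i\in I_W(u)$. Write the orthogonal decomposition $-J'(u)=d(u)+w$ with $d(u)\in\operatorname{span}\{d\}$ and $w\in d^\perp=\{v\in H:\langle v,d\rangle=0\}$. Then $$\langle J'(u), d_W(u)\rangle\le\langle J'(u), d(u)\rangle\le 0\quad\text{and}\quad \|d(u)\|\le\|d_W(u)\|,$$ where equality holds in the first inequality, or in the third inequality $\|d(u)\|\le\|d_W(u)\|$, if and only if $d(u)=d_W(u)$, and equality holds in the second inequality if and only if $d(u)=0$.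
   Context: $J'(u)$, $g_i'(u)$ denote gradients in $H$; $\mathbb{P}_C$ is the metric projection onto a closed convex set $C$. For $u\in\Omega$: $I_A(u)=\{i\in\mathcal{I}: g_i(u)=0\}$; $C_A(u)=\{\sum_{i\in I_A(u)}a_ig_i'(u): a_i\ge0\}$ ($=\{0\}$ if empty); $d_A(u)=-J'(u)-\mathbb{P}_{C_A(u)}(-J'(u))$; $I_W(u)=\{i\in I_A(u): \langle g_i'(u), d_A(u)\rangle=0\}$; $C_W(u)=\{\sum_{i\in I_W(u)}a_ig_i'(u): a_i\ge 0\}$ ($=\{0\}$ if empty); $d_W(u)=-J'(u)-\mathbb{P}_{C_W(u)}(-J'(u))$. *)

(* Defs.v *)
From HB Require Import structures.
From mathcomp Require Import all_boot all_order all_algebra.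
From mathcomp Require Import all_classical all_reals all_analysis.
Set Implicit Arguments. Unset Strict Implicit. Unset Printing Implicit Defensive.
Import Order.TTheory GRing.Theory Num.Theory.
Import numFieldNormedType.Exports.
Local Open Scope classical_set_scope.
Local Open Scope ring_scope.

(* A real Hilbert space is a complete normed space H whose norm comes from
   an inner product ip : H -> H -> R. *)
Record is_inner_product (R : realType) (H : normedModType R)
    (ip : H -> H -> R) : Prop := {
  ip_sym : forall x y, ip x y = ip y x;
  ip_addl : forall x y z, ip (x + y) z = ip x z + ip y z;
  ip_scalel : forall (a : R) x y, ip (a *: x) y = a * ip x y;
  ip_norm : forall x, ip x x = `|x| ^+ 2 }.

(* g : H -> R is C^1 with gradient g' (Riesz representative of the Frechet
   derivative w.r.t. ip) *)
Definition C1_with_gradient (R : realType) (H : normedModType R)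
    (ip : H -> H -> R) (g : H -> R) (g' : H -> H) : Prop :=
  (forall u, differentiable g u /\ forall v, 'd g u v = ip (g' u) v)
  /\ continuous g'.

(* metric projection onto C (C will be a closed convex nonempty set, so the
   minimizer exists and is unique) *)
Definition proj (R : realType) (H : normedModType R) (C : set H) (x : H) : H :=
  xget 0 [set p | C p /\ forall q, C q -> `|x - p| <= `|x - q|].

Definition cone (R : realType) (H : normedModType R) (I : finType)
    (S : {set I}) (v : I -> H) : set H :=
  [set x | exists a : I -> R, (forall i, 0 <= a i) /\ x = \sum_(i in S) a i *: v i].

Section Active.
Variables (R : realType) (H : normedModType R) (I : finType).
Variables (ip : H -> H -> R) (J : H -> R) (J' : H -> H)
          (g : I -> H -> R) (g' : I -> H -> H).

Definition Omega : set H := [set u | forall i, g i u <= 0].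
Definition I_A (u : H) : {set I} := [set i | g i u == 0].
Definition C_A (u : H) : set H := cone (I_A u) (fun i => g' i u).
Definition d_A (u : H) : H := - J' u - proj (C_A u) (- J' u).
Definition I_W (u : H) : {set I} := [set i in I_A u | ip (g' i u) (d_A u) == 0].
Definition C_W (u : H) : set H := cone (I_W u) (fun i => g' i u).
Definition d_W (u : H) : H := - J' u - proj (C_W u) (- J' u).
End Active.

(* Main.v *)
Require Import Defs.
From HB Require Import structures.
From mathcomp Require Import all_boot all_order all_algebra.
From mathcomp Require Import all_classical all_reals all_analysis.
Import Order.TTheory GRing.Theory Num.Theory.
Import numFieldNormedType.Exports.
Local Open Scope classical_set_scope.
Local Open Scope ring_scope.

From mathcomp Require Import ring lra.

Section IP.
Variables (R : realType) (H : normedModType R) (ip : H -> H -> R).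
Hypothesis hip : is_inner_product ip.

Lemma ip0l y : ip 0 y = 0.
Proof. by rewrite -(scale0r (0:H)) (ip_scalel hip) mul0r. Qed.
Lemma ipNl x y : ip (- x) y = - ip x y.
Proof. by rewrite -scaleN1r (ip_scalel hip) mulN1r. Qed.
Lemma ipBl x y z : ip (x - y) z = ip x z - ip y z.
Proof. by rewrite (ip_addl hip) ipNl. Qed.
Lemma ipDr x y z : ip x (y + z) = ip x y + ip x z.
Proof. by rewrite (ip_sym hip x) (ip_addl hip) (ip_sym hip y) (ip_sym hip z). Qed.
Lemma ipBr x y z : ip x (y - z) = ip x y - ip x z.
Proof. by rewrite (ip_sym hip x) ipBl (ip_sym hip y) (ip_sym hip z). Qed.
Lemma ipNr x y : ip x (- y) = - ip x y.
Proof. by rewrite (ip_sym hip x) ipNl (ip_sym hip y). Qed.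
Lemma ipZr a x y : ip x (a *: y) = a * ip x y.
Proof. by rewrite (ip_sym hip x) (ip_scalel hip) (ip_sym hip y). Qed.
Lemma ip_suml (I : finType) (S : {set I}) (F : I -> H) y :
  ip (\sum_(i in S) F i) y = \sum_(i in S) ip (F i) y.
Proof.
apply: (big_rec2 (fun a b => ip a y = b)); first exact: ip0l.
by move=> i a b _ <-; rewrite (ip_addl hip).
Qed.

Lemma proj_cone_props (I : finType) (S : {set I}) (v : I -> H) (d x : H) :
  (forall i, i \in S -> ip d (v i) = 0) ->
  ip (Defs.proj (cone S v) x) d = 0 /\ ip (x - Defs.proj (cone S v) x) (Defs.proj (cone S v) x) = 0.
Proof.
move=> hS; rewrite /Defs.proj; case: xgetP => [p _ [[a [a0 pE]] hmin] | _]; last first.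
  by rewrite ip0l (ip_sym hip) ip0l.
split.
  rewrite pE ip_suml big1 // => i iS.
  by rewrite (ip_scalel hip) (ip_sym hip) hS // mulr0.
set e := x - p; set c := ip e p; set n := ip p p.
have n0 : 0 <= n by rewrite /n (ip_norm hip) sqr_ge0.
have key : forall s : R, s <= 1 -> 0 <= 2 * s * c + s ^+ 2 * n.
  move=> s s1.
  have Cq : cone S v ((1 - s) *: p).
    exists (fun i => (1 - s) * a i); split.
      by move=> i; apply: mulr_ge0; [rewrite subr_ge0|].
    by rewrite pE scaler_sumr; apply: eq_bigr => i _; rewrite scalerA.
  have := hmin _ Cq.
  have -> : x - (1 - s) *: p = e + s *: p.
    by rewrite /e scalerBl scale1r opprB addrA addrAC.
  move=> h.
  have h2 : `|x - p| ^+ 2 <= `|e + s *: p| ^+ 2.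
    by rewrite lerXn2r // ?nnegrE.
  have E : ip (e + s *: p) (e + s *: p) = ip e e + (2 * s * c + s ^+ 2 * n).
    rewrite (ip_addl hip) (ipDr e e) (ipDr (s *: p) e) !(ip_scalel hip) !ipZr.
    rewrite (ip_sym hip p e) -/c -/n.
    ring.
  move: h2; rewrite -!(ip_norm hip) -/e E; lra.
have cab : 0 <= `|c| by [].
set K := n + `|c| + 1.
have K0 : 0 < K by rewrite /K; lra.
have hk := key (- c / K).
have s1 : - c / K <= 1.
  rewrite ler_pdivrMr // mul1r; rewrite /K.
  have := ler_normr c; have := ler_norm (- c); rewrite normrN; lra.
have {}hk := hk s1.
have : 0 <= (2 * (- c / K) * c + (- c / K) ^+ 2 * n) * K ^+ 2.
  by apply: mulr_ge0 => //; rewrite sqr_ge0.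
have -> : (2 * (- c / K) * c + (- c / K) ^+ 2 * n) * K ^+ 2 = c ^+ 2 * (n - 2 * K).
  by field; rewrite gt_eqF.
have nk : n - 2 * K < 0 by rewrite /K; lra.
move=> h; have : c ^+ 2 * (n - 2 * K) <= 0.
  by apply: mulr_ge0_le0; [rewrite sqr_ge0 | lra].
move=> h'; have : c ^+ 2 * (n - 2 * K) = 0 by apply/eqP; rewrite eq_le h' h.
by move/eqP; rewrite mulf_eq0 (lt_eqF nk) orbF sqrf_eq0 => /eqP.
Qed.
End IP.
Arguments ip0l {R H ip}. Arguments ipNl {R H ip}. Arguments ipBl {R H ip}.
Arguments ipDr {R H ip}. Arguments ipBr {R H ip}. Arguments ipNr {R H ip}.
Arguments ipZr {R H ip}. Arguments ip_suml {R H ip}.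

Theorem lemma7 (R : realType) (H : completeNormedModType R) (I : finType)
    (ip : H -> H -> R) (J : H -> R) (J' : H -> H)
    (g : I -> H -> R) (g' : I -> H -> H) :
  is_inner_product ip ->
  C1_with_gradient ip J J' ->
  (forall i, C1_with_gradient ip (g i) (g' i)) ->
  (forall u, Omega g u -> (0 < #|I_A g u|)%N ->
     forall a : I -> R, \sum_(i in I_A g u) a i *: g' i u = 0 ->
       forall i, i \in I_A g u -> a i = 0) ->
  forall (u d : H), Omega g u ->
  (forall i, i \in I_W ip J' g g' u -> ip d (g' i u) = 0) ->
  forall du w : H, (exists t : R, du = t *: d) -> ip w d = 0 ->
  - J' u = du + w ->
  (ip (J' u) (d_W ip J' g g' u) <= ip (J' u) du) /\
  (ip (J' u) du <= 0) /\
  (`|du| <= `|d_W ip J' g g' u|) /\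
  (ip (J' u) (d_W ip J' g g' u) = ip (J' u) du <-> du = d_W ip J' g g' u) /\
  (`|du| = `|d_W ip J' g g' u| <-> du = d_W ip J' g g' u) /\
  (ip (J' u) du = 0 <-> du = 0).
Proof.
move=> hip _ _ _ u d _ hW du w [t hdu] hwd hx.
have [hpd hpp] := @proj_cone_props R H ip hip I (I_W ip J' g g' u)
  (fun i => g' i u) d (- J' u) hW.
rewrite /d_W /C_W.
set p := Defs.proj _ _ in hpd hpp *.
set dW := - J' u - p in hpp *.
have dWE : dW = du + (w - p) by rewrite /dW hx addrA.
have zE : w - p = dW - du by rewrite dWE addrAC subrr add0r.
have cross : ip du (w - p) = 0.
  by rewrite hdu (ip_scalel hip) (ipBr hip) (ip_sym hip d w) hwd (ip_sym hip d p) hpd subrr mulr0.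
have nW : `|dW| ^+ 2 = `|du| ^+ 2 + `|w - p| ^+ 2.
  rewrite -!(ip_norm hip) dWE (ip_addl hip) (ipDr hip du du (w - p)).
  rewrite (ipDr hip (w - p) du (w - p)) cross (ip_sym hip (w - p) du) cross.
  by rewrite addr0 add0r.
have wdu : ip w du = 0 by rewrite hdu (ipZr hip) hwd mulr0.
have J1 : ip (J' u) dW = - `|dW| ^+ 2.
  have -> : J' u = - (dW + p) by rewrite /dW subrK opprK.
  by rewrite (ipNl hip) (ip_addl hip) (ip_sym hip p dW) hpp addr0 (ip_norm hip).
have J2 : ip (J' u) du = - `|du| ^+ 2.
  have -> : J' u = - (du + w) by rewrite -hx opprK.
  by rewrite (ipNl hip) (ip_addl hip) wdu addr0 (ip_norm hip).
have eqC : du = dW <-> `|w - p| = 0.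
  split; first by move=> e; rewrite zE -e subrr normr0.
  by move/eqP; rewrite normr_eq0 zE subr_eq0 => /eqP ->.
rewrite J1 J2.
have A0 : 0 <= `|du| by [].
have B0 : 0 <= `|dW| by [].
have C0 : 0 <= `|w - p| by [].
split; first by nra.
split; first by nra.
split; first by nra.
split.
  split; first by move=> h; apply/eqC; nra.
  by move=> ->.
split.
  split; first by move=> h; apply/eqC; nra.
  by move=> ->.
split; last by move=> ->; rewrite normr0 expr0n oppr0.
by move=> /eqP; rewrite oppr_eq0 sqrf_eq0 normr_eq0 => /eqP.
Qed.
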